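(* Fix $\rho\in(0,2]$. For any $N\ge1$, $\kappa\ne0$ and $\omega_1,\dots,\omega_N\in\mathbb{R}$ with \[ N\ge\frac2\rho,\qquad\frac{\max_i|\omega_i|}{|\kappa|}<\frac{\rho^{1.5}}{16}, \] there exists an equilibrium $(\theta_i^0)_{i=1}^N$ of the system $\dot\theta_i=\omega_i-\frac{\kappa}{N}\sum_{j=1}^N(1+\cos\theta_j)\sin\theta_i$ whose order parameter $\frac1N\sum_j(1+\cos\theta_j^0)$ lies in $[\frac14\rho,\frac32\rho]$. Moreover, it can be chosen so that there exists $1\le m\le N$ with $\frac\rho4<\frac mN\le\frac\rho2$ and \[ \frac{2|\omega_i|}{3\rho|\kappa|}\le|\theta_i^0|\le\frac{2\pi|\omega_i|}{\rho|\kappa|}\ (i=1,\dots,m),\qquad\frac{2|\omega_i|}{3\rho|\kappa|}\le|\theta_i^0-\pi|\le\frac{2\pi|\omega_i|}{\rho|\kappa|}\ (i=m+1,\dots,N). \]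
   Context: An equilibrium is an initial datum for which the right-hand side vanishes for every $i$ (so the solution is constant). *)

(* Defs.v *)
From Stdlib Require Import Reals Lra.
Open Scope R_scope.

Fixpoint sumN (N : nat) (f : nat -> R) : R :=
  match N with
  | O => 0
  | S n => sumN n f + f n
  end.

Definition order_param (N : nat) (theta : nat -> R) : R :=
  / INR N * sumN N (fun j => 1 + cos (theta j)).

Definition rhs (N : nat) (kappa : R) (omega theta : nat -> R) (i : nat) : R :=
  omega i - kappa / INR N * sumN N (fun j => 1 + cos (theta j)) * sin (theta i).

Definition equilibrium (N : nat) (kappa : R) (omega theta : nat -> R) : Prop :=
  forall i, (i < N)%nat -> rhs N kappa omega theta i = 0.

Fixpoint maxabsN (N : nat) (f : nat -> R) : R :=
  match N with
  | O => 0
  | S n => Rmax (maxabsN n f) (Rabs (f n))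
  end.

(* Main.v *)
Require Import Defs.
From Stdlib Require Import Reals Lra Lia ZArith.
Open Scope R_scope.

Lemma cont_sumN (n : nat) (f : nat -> R -> R) x :
  (forall j, (j < n)%nat -> continuity_pt (f j) x) ->
  continuity_pt (fun R => sumN n (fun j => f j R)) x.
Proof.
  induction n as [|n IH]; intros H; simpl.
  - apply continuity_pt_const. intros a b. reflexivity.
  - apply (continuity_pt_plus (fun R => sumN n (fun j => f j R)) (f n)).
    + apply IH. intros; apply H; lia.
    + apply H; lia.
Qed.

Lemma sumN_ext n f g : (forall j, (j < n)%nat -> f j = g j) -> sumN n f = sumN n g.
Proof.
  induction n; intros H; simpl; auto.
  rewrite IHn by (intros; apply H; lia). rewrite H by lia. reflexivity.
Qed.

Lemma sumN_le n f g : (forall j, (j < n)%nat -> f j <= g j) -> sumN n f <= sumN n g.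
Proof.
  induction n; intros H; simpl; [lra|].
  assert (sumN n f <= sumN n g) by (apply IHn; intros; apply H; lia).
  assert (f n <= g n) by (apply H; lia). lra.
Qed.

Lemma sumN_plus n f g : sumN n (fun j => f j + g j) = sumN n f + sumN n g.
Proof. induction n; simpl; [lra|]. rewrite IHn. lra. Qed.

Lemma sumN_const n c : sumN n (fun _ => c) = INR n * c.
Proof. induction n; simpl sumN; [simpl; lra|]. rewrite IHn, S_INR. lra. Qed.

Lemma sumN_ind n m c : (m <= n)%nat ->
  sumN n (fun j => if Nat.ltb j m then c else 0) = INR m * c.
Proof.
  induction n; intros H; simpl sumN.
  - replace m with 0%nat by lia. simpl; lra.
  - destruct (Nat.eq_dec m (S n)) as [E|E].
    + subst m. rewrite (sumN_ext n _ (fun _ => c)).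
      * rewrite sumN_const. replace (Nat.ltb n (S n)) with true by (symmetry; apply Nat.ltb_lt; lia).
        rewrite S_INR; lra.
      * intros j Hj. replace (Nat.ltb j (S n)) with true by (symmetry; apply Nat.ltb_lt; lia). auto.
    + rewrite IHn by lia. replace (Nat.ltb n m) with false by (symmetry; apply Nat.ltb_ge; lia). lra.
Qed.

Lemma maxabs_ge n f j : (j < n)%nat -> Rabs (f j) <= maxabsN n f.
Proof.
  induction n; intros H; [lia|]. simpl.
  destruct (Nat.eq_dec j n).
  - subst. apply Rmax_r.
  - eapply Rle_trans; [apply IHn; lia| apply Rmax_l].
Qed.

Lemma maxabs_nonneg n f : 0 <= maxabsN n f.
Proof. induction n; simpl; [lra|]. eapply Rle_trans; [apply IHn|apply Rmax_l]. Qed.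

Lemma asin_bounds x : 0 <= x <= 1/2 -> x <= asin x <= 3/2 * x.
Proof.
  intros Hx. set (y := asin x).
  assert (Hs : sin y = x) by (apply sin_asin; lra).
  assert (Hb := asin_bound x). fold y in Hb.
  pose proof PI_4. pose proof PI2_3_2.
  assert (Hy0 : 0 <= y).
  { destruct (Rle_or_lt 0 y) as [h|h]; auto.
    assert (0 < sin (- y)) by (apply sin_gt_0; lra).
    rewrite sin_neg in H1. lra. }
  assert (Hxy : x <= y).
  { destruct (Req_dec y 0) as [e|e].
    - rewrite e, sin_0 in Hs. lra.
    - pose proof (sin_lt_x y ltac:(lra)). lra. }
  split; auto.
  pose proof (sin_bound y 0 Hy0 ltac:(lra)) as [Hl _].
  unfold sin_approx, sin_term in Hl. simpl in Hl. rewrite Hs in Hl.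
  destruct (Rle_or_lt y 1).
  - assert (y*y*y <= y) by nra. nra.
  - exfalso. assert ((y-2)*(y*y+2*y-2) <= 0) by nra. nra.
Qed.

Definition sv (om : nat -> R) (k R : R) j := om j / (k * R).
Definition cs m om k R j :=
  if Nat.ltb j m then sqrt (1 - (sv om k R j)²) else - sqrt (1 - (sv om k R j)²).
Definition Fp N m om k R := / INR N * sumN N (fun j => 1 + cs m om k R j).
Definition th m om k R j :=
  if Nat.ltb j m then asin (sv om k R j) else PI - asin (sv om k R j).

Lemma cont_sq om k x j : k * x <> 0 -> 0 <= 1 - (sv om k x j)² ->
  continuity_pt (fun R => sqrt (1 - (sv om k R j)²)) x.
Proof.
  intros H1 H2.
  apply (continuity_pt_comp (fun R => 1 - (sv om k R j)²) sqrt).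
  - unfold sv. reg.
  - apply continuity_pt_sqrt; auto.
Qed.

Lemma cont_Fp N m om k x : k * x <> 0 -> (forall j, (j < N)%nat -> 0 <= 1 - (sv om k x j)²) ->
  continuity_pt (Fp N m om k) x.
Proof.
  intros H1 H2. unfold Fp.
  apply (continuity_pt_scal (fun R => sumN N (fun j => 1 + cs m om k R j)) (/ INR N)).
  apply (cont_sumN N (fun j R => 1 + cs m om k R j)).
  intros j Hj. apply (continuity_pt_plus (fun _ => 1) (fun R => cs m om k R j)).
  - apply continuity_pt_const. intros a b; reflexivity.
  - unfold cs. destruct (Nat.ltb j m).
    + apply cont_sq; auto.
    + apply (continuity_pt_opp (fun R => sqrt (1 - (sv om k R j)²))). apply cont_sq; auto.
Qed.

Lemma cos_th m om k R j : Rabs (sv om k R j) <= 1 -> cos (th m om k R j) = cs m om k R j.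
Proof.
  intros H. assert (-1 <= sv om k R j <= 1) by (pose proof (Rle_abs (sv om k R j)); pose proof (Rle_abs (- sv om k R j)); rewrite Rabs_Ropp in *; lra); clear H. unfold th, cs. destruct (Nat.ltb j m).
  - apply cos_asin; auto.
  - rewrite cos_minus, cos_PI, sin_PI, cos_asin by auto. ring.
Qed.

Lemma sin_th m om k R j : Rabs (sv om k R j) <= 1 -> sin (th m om k R j) = sv om k R j.
Proof.
  intros H. assert (-1 <= sv om k R j <= 1) by (pose proof (Rle_abs (sv om k R j)); pose proof (Rle_abs (- sv om k R j)); rewrite Rabs_Ropp in *; lra); clear H. unfold th. destruct (Nat.ltb j m).
  - apply sin_asin; auto.
  - rewrite sin_minus, cos_PI, sin_PI, sin_asin by auto. ring.
Qed.

Lemma abs_sv om k R j : 0 < R -> k <> 0 -> Rabs (sv om k R j) = Rabs (om j) / Rabs k / R.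
Proof.
  intros HR Hk. unfold sv, Rdiv. rewrite Rabs_mult, Rabs_inv, Rabs_mult, (Rabs_pos_eq R) by (try lra; nra).
  field. split; [lra|]. apply Rabs_no_R0; auto.
Qed.

Lemma asin_abs s : Rabs s <= 1/2 -> Rabs s <= Rabs (asin s) <= 3/2 * Rabs s.
Proof.
  intros H. destruct (Rle_or_lt 0 s).
  - rewrite Rabs_pos_eq in * by lra. pose proof (asin_bounds s ltac:(lra)).
    rewrite Rabs_pos_eq by lra. lra.
  - rewrite Rabs_left in * by lra.
    pose proof (asin_bounds (-s) ltac:(lra)). rewrite asin_opp in H1.
    rewrite Rabs_left1 by lra. lra.
Qed.

Lemma div_le_half b B R rho : 0 <= b <= B -> B < rho/8 -> rho/4 <= R -> 0 < rho -> b / R <= 1/2.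
Proof.
  intros. assert (b / R * R = b) by (field; lra).
  assert (0 <= b / R) by (unfold Rdiv; apply Rmult_le_pos; [lra | left; apply Rinv_0_lt_compat; lra]). nra.
Qed.

Lemma final_bounds b z rho : 0 <= b -> 0 < rho -> rho/4 <= z <= 3/2*rho -> 3 < PI ->
  2 * b / (3 * rho) <= b / z /\ 3/2 * (b / z) <= 2 * PI * b / rho.
Proof.
  intros. assert (b / z * z = b) by (field; lra).
  assert (2 * b / (3 * rho) * (3*rho) = 2*b) by (field; lra).
  assert (2 * PI * b / rho * rho = 2 * PI * b) by (field; lra).
  assert (0 <= b / z) by (unfold Rdiv; apply Rmult_le_pos; [lra | left; apply Rinv_0_lt_compat; lra]).
  split; nra.
Qed.

Theorem theorem2p20 (rho : R) (N : nat) (kappa : R) (omega : nat -> R) :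
  0 < rho <= 2 ->
  (1 <= N)%nat ->
  kappa <> 0 ->
  INR N >= 2 / rho ->
  maxabsN N omega / Rabs kappa < rho * sqrt rho / 16 ->
  exists theta : nat -> R,
    equilibrium N kappa omega theta /\
    rho / 4 <= order_param N theta <= 3 / 2 * rho /\
    exists m : nat,
      (1 <= m <= N)%nat /\
      rho / 4 < INR m / INR N <= rho / 2 /\
      (forall i, (i < m)%nat ->
         2 * Rabs (omega i) / (3 * rho * Rabs kappa) <= Rabs (theta i)
         <= 2 * PI * Rabs (omega i) / (rho * Rabs kappa)) /\
      (forall i, (m <= i < N)%nat ->
         2 * Rabs (omega i) / (3 * rho * Rabs kappa) <= Rabs (theta i - PI)
         <= 2 * PI * Rabs (omega i) / (rho * Rabs kappa)).
Proof.
  intros Hrho HN Hk HNr Hmax.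
  set (M := maxabsN N omega) in *.
  set (k := Rabs kappa) in *.
  assert (Hkp : 0 < k) by (apply Rabs_pos_lt; auto).
  assert (HM0 : 0 <= M) by apply maxabs_nonneg.
  set (Bd := M / k) in *.
  assert (HB0 : 0 <= Bd) by (unfold Bd, Rdiv; apply Rmult_le_pos; [lra | left; apply Rinv_0_lt_compat; lra]).
  pose proof (sqrt_sqrt rho ltac:(lra)) as Hsq.
  pose proof (sqrt_pos rho) as Hsq0.
  assert (HB2 : Bd * Bd < rho * rho * rho / 256).
  { assert (Bd * Bd < (rho * sqrt rho / 16) * (rho * sqrt rho / 16)) by nra.
    assert (E: (rho*sqrt rho/16)*(rho*sqrt rho/16) = rho*rho*(sqrt rho*sqrt rho)/256) by field.
    rewrite Hsq in E. lra. }
  assert (HB : Bd < rho / 8) by nra.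
  assert (Hb : forall j, (j < N)%nat -> 0 <= Rabs (omega j) / k <= Bd).
  { intros j Hj. split.
    - unfold Rdiv; apply Rmult_le_pos; [apply Rabs_pos | left; apply Rinv_0_lt_compat; lra].
    - unfold Bd, Rdiv. apply Rmult_le_compat_r; [left; apply Rinv_0_lt_compat; lra|].
      apply maxabs_ge; auto. }
  assert (HN0 : 0 < INR N) by (apply lt_0_INR; lia).
  assert (HNr' : INR N * rho >= 2).
  { assert (2 / rho * rho = 2) by (field; lra). nra. }
  set (x := INR N * rho / 2).
  destruct (archimed x) as [Hu1 Hu2].
  set (z := (up x - 1)%Z).
  assert (Hz : IZR z = IZR (up x) - 1) by (unfold z; rewrite minus_IZR; reflexivity).
  assert (Hz1 : (1 <= z)%Z).
  { apply le_IZR. assert (0 < IZR z) by (unfold x in *; lra).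
    assert (0 < z)%Z by (apply lt_IZR; auto). apply IZR_le. lia. }
  set (m := Z.to_nat z).
  assert (Hm : INR m = IZR z).
  { unfold m. rewrite INR_IZR_INZ, Z2Nat.id by lia. reflexivity. }
  assert (Hm1 : 1 <= INR m) by (rewrite Hm; apply IZR_le; auto).
  assert (HmN : (m <= N)%nat).
  { apply INR_le. assert (x <= INR N) by (unfold x; nra). rewrite Hm, Hz. lra. }
  assert (Hmq : INR m / INR N * INR N = INR m) by (field; lra).
  assert (Hmr : rho / 4 < INR m / INR N <= rho / 2).
  { unfold x in *. split.
    - destruct (Rle_or_lt (INR N * rho) 4); nra.
    - nra. }
  assert (Hsmall : forall r j, rho/4 <= r -> (j < N)%nat -> Rabs (sv omega kappa r j) <= 1/2).
  { intros r j HR Hj. rewrite abs_sv by (auto; lra). fold k.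
    apply (div_le_half _ Bd _ rho); [apply Hb; auto | lra | lra | lra]. }
  assert (Hsq1 : forall r j, rho/4 <= r -> (j < N)%nat -> 0 <= 1 - (sv omega kappa r j)²).
  { intros r j HR Hj. pose proof (Hsmall r j HR Hj). rewrite Rsqr_abs.
    pose proof (Rabs_pos (sv omega kappa r j)). unfold Rsqr. nra. }
  assert (Hsq2 : forall r j, rho/4 <= r -> (j < N)%nat -> 1 - (sv omega kappa r j)² <= 1).
  { intros. pose proof (Rle_0_sqr (sv omega kappa r j)). lra. }
  assert (Hlo : Fp N m omega kappa (rho/4) > rho/4).
  { unfold Fp.
    assert (INR m <= sumN N (fun j => 1 + cs m omega kappa (rho/4) j)).
    { replace (INR m) with (INR m * 1) by ring. rewrite <- (sumN_ind N m 1 HmN).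
      apply sumN_le. intros j Hj. unfold cs. destruct (Nat.ltb j m).
      - pose proof (sqrt_pos (1 - (sv omega kappa (rho/4) j)²)). lra.
      - pose proof (sqrt_le_1_alt _ _ (Hsq2 (rho/4) j ltac:(lra) Hj)). rewrite sqrt_1 in H. lra. }
    assert (/ INR N * INR m = INR m / INR N) by (unfold Rdiv; ring).
    assert (0 < / INR N) by (apply Rinv_0_lt_compat; lra).
    nra. }
  assert (Hhi : Fp N m omega kappa (3/2*rho) < 3/2*rho).
  { unfold Fp. set (eps := rho / 576).
    assert (Hs : forall j, (j < N)%nat -> (sv omega kappa (3/2*rho) j)² <= eps).
    { intros j Hj. rewrite Rsqr_abs. rewrite abs_sv by (auto; lra). fold k.
      set (b := Rabs (omega j) / k). pose proof (Hb j Hj). fold b in H.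
      set (q := b / (3/2*rho)). assert (q * (3/2*rho) = b) by (unfold q; field; lra).
      assert (0 <= q) by nra. unfold Rsqr, eps. nra. }
    assert (sumN N (fun j => 1 + cs m omega kappa (3/2*rho) j) <= INR m * 2 + INR N * eps).
    { rewrite <- (sumN_ind N m 2 HmN), <- sumN_const, <- sumN_plus.
      apply sumN_le. intros j Hj. pose proof (Hs j Hj) as G0.
      pose proof (Hsq1 (3/2*rho) j ltac:(lra) Hj) as G1. pose proof (Hsq2 (3/2*rho) j ltac:(lra) Hj) as G2.
      set (u := 1 - (sv omega kappa (3/2*rho) j)²) in *.
      pose proof (sqrt_le_1_alt _ _ G2) as G3. rewrite sqrt_1 in G3.
      pose proof (sqrt_sqrt u G1). pose proof (sqrt_pos u).
      unfold cs. fold u. destruct (Nat.ltb j m).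
      - assert (0 <= eps) by (unfold eps; lra). lra.
      - assert (u <= sqrt u) by nra. unfold u in *. lra. }
    assert (0 < / INR N) by (apply Rinv_0_lt_compat; lra).
    assert (/ INR N * (INR m * 2 + INR N * eps) = 2 * (INR m / INR N) + eps) by (field; lra).
    unfold eps in *. nra. }
  destruct (Ranalysis5.IVT_interv (fun R => R - Fp N m omega kappa R) (rho/4) (3/2*rho)) as [zs [Hzs Hfz]].
  { intros a Ha. apply (continuity_pt_minus (fun R => R) (Fp N m omega kappa)).
    - apply derivable_continuous_pt, derivable_pt_id.
    - apply cont_Fp.
      + apply Rmult_integral_contrapositive_currified; lra.
      + intros j Hj. apply Hsq1; [lra|auto]. }
  { lra. }
  { lra. }
  { lra. }
  assert (HF : Fp N m omega kappa zs = zs) by lra.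
  clear Hfz.
  assert (Hsum : sumN N (fun j => 1 + cos (th m omega kappa zs j)) =
                 sumN N (fun j => 1 + cs m omega kappa zs j)).
  { apply sumN_ext. intros j Hj. rewrite cos_th; auto.
    pose proof (Hsmall zs j ltac:(lra) Hj). lra. }
  exists (th m omega kappa zs). split; [|split; [|exists m; split; [|split; [auto|split]]]].
  - intros i Hi. unfold rhs. rewrite sin_th by (pose proof (Hsmall zs i ltac:(lra) Hi); lra).
    rewrite Hsum. unfold Fp in HF.
    replace (kappa / INR N * sumN N (fun j => 1 + cs m omega kappa zs j)) with (kappa * (/ INR N * sumN N (fun j => 1 + cs m omega kappa zs j)))
      by (unfold Rdiv; ring).
    rewrite HF.
    unfold sv. field. lra.
  - unfold order_param. rewrite Hsum. fold (Fp N m omega kappa zs). lra.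
  - split; [lia|auto].
  - intros i Hi. assert (Hi' : (i < N)%nat) by lia.
    unfold th. replace (Nat.ltb i m) with true by (symmetry; apply Nat.ltb_lt; lia).
    pose proof (asin_abs _ (Hsmall zs i ltac:(lra) Hi')).
    rewrite abs_sv in H by (auto; lra). fold k in H.
    pose proof (Hb i Hi').
    pose proof PI2_3_2.
    destruct (final_bounds (Rabs (omega i) / k) zs rho ltac:(lra) ltac:(lra) ltac:(lra) ltac:(lra)).
    replace (2 * Rabs (omega i) / (3 * rho * k)) with (2 * (Rabs (omega i) / k) / (3 * rho)) by (field; lra).
    replace (2 * PI * Rabs (omega i) / (rho * k)) with (2 * PI * (Rabs (omega i) / k) / rho) by (field; lra).
    lra.
  - intros i Hi. assert (Hi' : (i < N)%nat) by lia.
    unfold th. replace (Nat.ltb i m) with false by (symmetry; apply Nat.ltb_ge; lia).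
    replace (PI - asin (sv omega kappa zs i) - PI) with (- asin (sv omega kappa zs i)) by ring.
    rewrite Rabs_Ropp.
    pose proof (asin_abs _ (Hsmall zs i ltac:(lra) Hi')).
    rewrite abs_sv in H by (auto; lra). fold k in H.
    pose proof (Hb i Hi').
    pose proof PI2_3_2.
    destruct (final_bounds (Rabs (omega i) / k) zs rho ltac:(lra) ltac:(lra) ltac:(lra) ltac:(lra)).
    replace (2 * Rabs (omega i) / (3 * rho * k)) with (2 * (Rabs (omega i) / k) / (3 * rho)) by (field; lra).
    replace (2 * PI * Rabs (omega i) / (rho * k)) with (2 * PI * (Rabs (omega i) / k) / rho) by (field; lra).
    lra.
Qed.
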